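(* Let $n\ge2$ and let $\omega\in\widetilde{S}_n$ avoid $231$. Let $\alpha\in\{1,\dots,n\}$ be the index with $\omega_\alpha=\max\{\omega_1,\dots,\omega_n\}$. Then $n\le\omega_\alpha\le n+\alpha-1$, and $u=\sigma_\ell^{\,\omega_\alpha-n}(\omega)$ satisfies $\{u_1,\dots,u_n\}=\{1,\dots,n\}$ (so $u$ restricts to an ordinary permutation of $\{1,\dots,n\}$) with $u_{i}=n$ for $i=\alpha-\omega_\alpha+n$. Conversely, if $u\in\widetilde{S}_n$ with $\{u_1,\dots,u_n\}=\{1,\dots,n\}$ avoids $231$ and $u_i=n$, then $\sigma_r^{\,j}(u)$ avoids $231$ for every $0\le j\le n-i$.
   Context: For $n\ge 2$, the affine symmetric group $\widetilde{S}_n$ is the set of bijections $\omega:\mathbb{Z}\to\mathbb{Z}$ such that $\omega(i+n)=\omega(i)+n$ for all $i\in\mathbb{Z}$ and $\sum_{i=1}^n\omega(i)=\binom{n+1}{2}$; write $\omega_i=\omega(i)$. The map $\sigma_r:\widetilde{S}_n\to\widetilde{S}_n$ is defined by $\sigma_r(\omega)_i=\omega_{i-1}+1$ for all $i\in\mathbb{Z}$ (so $\sigma_r(\omega)_1=\omega_n-n+1$), and $\sigma_\ell=\sigma_r^{-1}$. For $p\in S_k$, $\omega$ contains $p$ if there exist integers $i_1<\cdots<i_k$ such that $\omega_{i_1}\cdots\omega_{i_k}$ has the same relative order as $p_1\cdots p_k$; otherwise $\omega$ avoids $p$. *)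

(* Defs.v *)
From Stdlib Require Import ZArith Lia List.
Open Scope Z_scope.

Fixpoint sum_w (w : Z -> Z) (m : nat) : Z :=
  match m with
  | O => 0
  | S k => sum_w w k + w (Z.of_nat (S k))
  end.

Definition affine_perm (n : nat) (w : Z -> Z) : Prop :=
  (forall x y, w x = w y -> x = y) /\
  (forall y, exists x, w x = y) /\
  (forall i, w (i + Z.of_nat n) = w i + Z.of_nat n) /\
  sum_w w n = Z.of_nat n * (Z.of_nat n + 1) / 2.

Definition sigma_r (w : Z -> Z) : Z -> Z := fun i => w (i - 1) + 1.
Definition sigma_l (w : Z -> Z) : Z -> Z := fun i => w (i + 1) - 1.

(* Pattern containment: p = [p_1; ...; p_k] (one-line notation, as integers).
   w contains p if there are indices i_1 < ... < i_k (given by f on 0..k-1)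
   with w_{i_a} < w_{i_b} iff p_a < p_b. *)
Definition contains (w : Z -> Z) (p : list Z) : Prop :=
  exists f : nat -> Z,
    (forall a b, (a < b < length p)%nat -> f a < f b) /\
    (forall a b, (a < length p)%nat -> (b < length p)%nat ->
       (w (f a) < w (f b) <-> nth a p 0 < nth b p 0)).

Definition avoids (w : Z -> Z) (p : list Z) : Prop := ~ contains w p.

Definition window_is_perm (n : nat) (u : Z -> Z) : Prop :=
  forall x, (exists i, 1 <= i <= Z.of_nat n /\ u i = x) <-> 1 <= x <= Z.of_nat n.

(* Main.v *)
Require Import Defs.
From Stdlib Require Import ZArith Lia List Classical FinFun.
Import ListNotations.
Open Scope Z_scope.

Fixpoint lsum (l : list Z) : Z := match l with nil => 0 | x :: r => x + lsum r end.

Lemma lsum_app l1 l2 : lsum (l1 ++ l2) = lsum l1 + lsum l2.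
Proof. induction l1; simpl; lia. Qed.

Lemma lsum_opp l : lsum (map Z.opp l) = - lsum l.
Proof. induction l; simpl; lia. Qed.

Lemma min_exists (l : list Z) : l <> nil -> exists x, In x l /\ forall y, In y l -> x <= y.
Proof.
  induction l as [|a l IH]; intros H; [congruence|].
  destruct l as [|b l'].
  - exists a. split; [left; auto|]. intros y [<-|[]]; lia.
  - destruct IH as [x [Hx Hm]]; [discriminate|].
    destruct (Z.le_gt_cases a x).
    + exists a; split; [left; auto|]. intros y [<-|Hy]; [lia|]. specialize (Hm y Hy); lia.
    + exists x; split; [right; auto|]. intros y [<-|Hy]; [lia|]. auto.
Qed.

Lemma sum_min : forall m (l : list Z) c, length l = m -> NoDup l ->
  (forall x, In x l -> c <= x) ->
  2 * lsum l >= 2 * Z.of_nat m * c + Z.of_nat m * (Z.of_nat m - 1).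
Proof.
  induction m as [|m IH]; intros l c Hlen Hnd Hc.
  - destruct l; [simpl; lia| simpl in Hlen; discriminate].
  - destruct (min_exists l) as [x0 [Hin Hmin]].
    { intro; subst; simpl in Hlen; discriminate. }
    destruct (in_split _ _ Hin) as [l1 [l2 ->]].
    assert (Hnd' : NoDup (l1 ++ l2)) by (eapply NoDup_remove_1; eauto).
    assert (Hni : ~ In x0 (l1 ++ l2)) by (eapply NoDup_remove_2; eauto).
    assert (Hlen' : length (l1 ++ l2) = m).
    { rewrite length_app in *; simpl in Hlen; lia. }
    assert (Hc' : forall y, In y (l1 ++ l2) -> x0 + 1 <= y).
    { intros y Hy. assert (x0 <= y).
      { apply Hmin; apply in_app_or in Hy; apply in_or_app; destruct Hy; [left|right; right]; auto. }
      assert (y <> x0) by (intro; subst; auto). lia. }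
    specialize (IH _ _ Hlen' Hnd' Hc').
    assert (Hx0c : c <= x0) by (apply Hc; apply in_or_app; right; left; auto).
    rewrite lsum_app in *. simpl lsum. rewrite Nat2Z.inj_succ. nia.
Qed.

Lemma sum_min_plus (l : list Z) a x : NoDup l -> (forall y, In y l -> a <= y) -> In x l ->
  a + Z.of_nat (length l) <= x ->
  2 * lsum l >= 2 * Z.of_nat (length l) * a + Z.of_nat (length l) * (Z.of_nat (length l) - 1) + 2.
Proof.
  intros Hnd Ha Hin Hx.
  destruct (in_split _ _ Hin) as [l1 [l2 ->]].
  assert (Hnd' : NoDup (l1 ++ l2)) by (eapply NoDup_remove_1; eauto).
  assert (Hc' : forall y, In y (l1 ++ l2) -> a <= y).
  { intros y Hy. apply Ha; apply in_app_or in Hy; apply in_or_app; destruct Hy; [left|right; right]; auto. }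
  pose proof (sum_min (length (l1 ++ l2)) _ a eq_refl Hnd' Hc') as H.
  rewrite lsum_app in *. simpl lsum. rewrite length_app in *. simpl length in *.
  rewrite ?Nat2Z.inj_add, ?Nat2Z.inj_succ in *. nia.
Qed.

Lemma map_opp_props (l : list Z) : NoDup l -> NoDup (map Z.opp l).
Proof. intros; apply FinFun.Injective_map_NoDup; auto. intros x y Hxy; lia. Qed.

Lemma sum_max (l : list Z) a : NoDup l -> (forall y, In y l -> y <= a) ->
  2 * lsum l <= 2 * Z.of_nat (length l) * a - Z.of_nat (length l) * (Z.of_nat (length l) - 1).
Proof.
  intros Hnd Ha.
  pose proof (sum_min (length l) (map Z.opp l) (- a)) as H.
  rewrite length_map, lsum_opp in H.
  assert (forall x, In x (map Z.opp l) -> -a <= x).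
  { intros x Hx. apply in_map_iff in Hx. destruct Hx as [y [<- Hy]]. specialize (Ha y Hy); lia. }
  specialize (H eq_refl (map_opp_props l Hnd) H0). nia.
Qed.

Lemma sum_max_minus (l : list Z) a x : NoDup l -> (forall y, In y l -> y <= a) -> In x l ->
  x <= a - Z.of_nat (length l) ->
  2 * lsum l <= 2 * Z.of_nat (length l) * a - Z.of_nat (length l) * (Z.of_nat (length l) - 1) - 2.
Proof.
  intros Hnd Ha Hin Hx.
  pose proof (sum_min_plus (map Z.opp l) (- a) (- x)) as H.
  rewrite length_map, lsum_opp in H.
  assert (forall x, In x (map Z.opp l) -> -a <= x).
  { intros z Hz. apply in_map_iff in Hz. destruct Hz as [y [<- Hy]]. specialize (Ha y Hy); lia. }
  specialize (H (map_opp_props l Hnd) H0 (in_map Z.opp _ _ Hin) ltac:(lia)). nia.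
Qed.

Definition win (w : Z -> Z) (n : nat) (c : Z) := map (fun j : nat => w (c + Z.of_nat j)) (seq 1 n).

Lemma In_win w n c x : In x (win w n c) <-> exists i, c + 1 <= i <= c + Z.of_nat n /\ w i = x.
Proof.
  unfold win; rewrite in_map_iff; split.
  - intros [j [<- Hj]]. apply in_seq in Hj. exists (c + Z.of_nat j). split; [lia|auto].
  - intros [i [Hi <-]]. exists (Z.to_nat (i - c)). split.
    + f_equal. lia.
    + apply in_seq. lia.
Qed.

Lemma NoDup_win w n c : (forall x y, w x = w y -> x = y) -> NoDup (win w n c).
Proof.
  intros Hinj. unfold win. apply FinFun.Injective_map_NoDup; [|apply seq_NoDup].
  intros a b H. apply Hinj in H. lia.
Qed.

Lemma length_win w n c : length (win w n c) = n.
Proof. unfold win. rewrite length_map, length_seq. auto. Qed.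

Lemma lsum_shift (f : Z -> Z) c m :
  lsum (map (fun j : nat => f (c + 1 + Z.of_nat j)) (seq 1 m)) =
  lsum (map (fun j : nat => f (c + Z.of_nat j)) (seq 1 m)) - f (c + 1) + f (c + Z.of_nat m + 1).
Proof.
  induction m.
  - simpl lsum. replace (c + Z.of_nat 0 + 1) with (c + 1) by lia. lia.
  - rewrite !seq_S, !map_app, !lsum_app. rewrite IHm. cbn [map lsum].
    replace (c + 1 + Z.of_nat (1 + m)) with (c + Z.of_nat (S m) + 1) by lia.
    replace (c + Z.of_nat (1 + m)) with (c + Z.of_nat m + 1) by lia. lia.
Qed.

Lemma sum_w_win w m : sum_w w m = lsum (win w m 0).
Proof.
  induction m.
  - reflexivity.
  - unfold win in *. rewrite seq_S, map_app, lsum_app, <- IHm. cbn [sum_w map lsum].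
    replace (0 + Z.of_nat (1 + m)) with (Z.of_nat (S m)) by lia. lia.
Qed.

Lemma per n w (Hstep : forall i, w (i + Z.of_nat n) = w i + Z.of_nat n) :
  forall t i, w (i + t * Z.of_nat n) = w i + t * Z.of_nat n.
Proof.
  intros t; induction t using Z.peano_ind.
  - intros; rewrite Z.mul_0_l, !Z.add_0_r; auto.
  - intros i. replace (i + Z.succ t * Z.of_nat n) with ((i + t * Z.of_nat n) + Z.of_nat n) by ring.
    rewrite Hstep, IHt. ring.
  - intros i. rewrite <- Z.sub_1_r. specialize (IHt (i - Z.of_nat n)).
    replace (i - Z.of_nat n + t * Z.of_nat n) with (i + (t - 1) * Z.of_nat n) in IHt by ring.
    rewrite IHt. pose proof (Hstep (i - Z.of_nat n)) as H.
    replace (i - Z.of_nat n + Z.of_nat n) with i in H by ring. lia.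
Qed.

Lemma win_sum n w (Hstep : forall i, w (i + Z.of_nat n) = w i + Z.of_nat n) :
  forall c, lsum (win w n c) = lsum (win w n 0) + c * Z.of_nat n.
Proof.
  assert (Hs : forall c, lsum (win w n (c + 1)) = lsum (win w n c) + Z.of_nat n).
  { intros c. unfold win. rewrite lsum_shift. pose proof (Hstep (c + 1)) as H.
    replace (c + 1 + Z.of_nat n) with (c + Z.of_nat n + 1) in H by ring. lia. }
  intros c; induction c using Z.peano_ind.
  - lia.
  - rewrite <- Z.add_1_r, Hs. lia.
  - specialize (Hs (Z.pred c)). replace (Z.pred c + 1) with c in Hs by lia. lia.
Qed.

Lemma tri_even m : exists q, Z.of_nat m * (Z.of_nat m + 1) = 2 * q.
Proof.
  induction m. - exists 0; reflexivity.
  - destruct IHm as [q Hq]. exists (q + Z.of_nat m + 1). rewrite Nat2Z.inj_succ. nia.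
Qed.

Lemma decomp n (Hn : (1 <= n)%nat) c i : exists t i0, i = i0 + t * Z.of_nat n /\ c + 1 <= i0 <= c + Z.of_nat n.
Proof.
  exists ((i - c - 1) / Z.of_nat n), (i - ((i - c - 1) / Z.of_nat n) * Z.of_nat n).
  pose proof (Z.div_mod (i - c - 1) (Z.of_nat n) ltac:(lia)).
  pose proof (Z.mod_pos_bound (i - c - 1) (Z.of_nat n) ltac:(lia)). lia.
Qed.

Lemma pat231 w i j l : i < j < l -> w l < w i < w j -> contains w (2 :: 3 :: 1 :: nil).
Proof.
  intros Hij Hv. exists (fun a => match a with O => i | S O => j | _ => l end).
  split.
  - intros a b Hab. simpl in Hab. destruct a as [|[|[|a]]]; destruct b as [|[|[|b]]]; lia.
  - intros a b Ha Hb. simpl in Ha, Hb.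
    destruct a as [|[|[|a]]]; destruct b as [|[|[|b]]]; simpl; try (split; intros; lia); lia.
Qed.

Lemma iter_l m w i : Nat.iter m sigma_l w i = w (i + Z.of_nat m) - Z.of_nat m.
Proof.
  revert i; induction m; intros i.
  - simpl. rewrite Z.add_0_r, Z.sub_0_r. reflexivity.
  - simpl Nat.iter. unfold sigma_l at 1. rewrite IHm.
    replace (i + 1 + Z.of_nat m) with (i + Z.of_nat (S m)) by lia. lia.
Qed.

Lemma iter_r m w i : Nat.iter m sigma_r w i = w (i - Z.of_nat m) + Z.of_nat m.
Proof.
  revert i; induction m; intros i.
  - simpl. replace (i - 0) with i by lia. lia.
  - simpl Nat.iter. unfold sigma_r at 1. rewrite IHm.
    replace (i - 1 - Z.of_nat m) with (i - Z.of_nat (S m)) by lia. lia.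
Qed.

Lemma bal_min n w c (Hn : (1 <= n)%nat) (Hinj : forall x y, w x = w y -> x = y)
  (Hs : 2 * lsum (win w n c) = 2 * Z.of_nat n * c + Z.of_nat n * (Z.of_nat n + 1)) :
  (forall i, c + 1 <= i <= c + Z.of_nat n -> c + 1 <= w i) ->
  forall i, c + 1 <= i <= c + Z.of_nat n -> w i <= c + Z.of_nat n.
Proof.
  intros Hlow i Hi. destruct (Z_le_gt_dec (w i) (c + Z.of_nat n)) as [|Hgt]; [auto|exfalso].
  pose proof (sum_min_plus (win w n c) (c + 1) (w i) (NoDup_win w n c Hinj)) as H.
  rewrite length_win in H.
  assert (H1 : forall y, In y (win w n c) -> c + 1 <= y).
  { intros y Hy. apply In_win in Hy. destruct Hy as [j [Hj <-]]. auto. }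
  assert (H2 : In (w i) (win w n c)) by (apply In_win; eauto).
  specialize (H H1 H2 ltac:(lia)). nia.
Qed.

Lemma bal_max n w c (Hn : (1 <= n)%nat) (Hinj : forall x y, w x = w y -> x = y)
  (Hs : 2 * lsum (win w n c) = 2 * Z.of_nat n * c + Z.of_nat n * (Z.of_nat n + 1)) :
  (forall i, c + 1 <= i <= c + Z.of_nat n -> w i <= c + Z.of_nat n) ->
  forall i, c + 1 <= i <= c + Z.of_nat n -> c + 1 <= w i.
Proof.
  intros Hhi i Hi. destruct (Z_le_gt_dec (c + 1) (w i)) as [|Hgt]; [auto|exfalso].
  pose proof (sum_max_minus (win w n c) (c + Z.of_nat n) (w i) (NoDup_win w n c Hinj)) as H.
  rewrite length_win in H.
  assert (H1 : forall y, In y (win w n c) -> y <= c + Z.of_nat n).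
  { intros y Hy. apply In_win in Hy. destruct Hy as [j [Hj <-]]. auto. }
  assert (H2 : In (w i) (win w n c)) by (apply In_win; eauto).
  specialize (H H1 H2 ltac:(lia)). nia.
Qed.

Lemma part2 (u : Z -> Z) j : avoids u (2 :: 3 :: 1 :: nil) ->
  avoids (Nat.iter j sigma_r u) (2 :: 3 :: 1 :: nil).
Proof.
  unfold avoids. intros Hav [f [H1 H2]]. apply Hav.
  exists (fun a => f a - Z.of_nat j). split.
  - intros a b Hab. specialize (H1 a b Hab). lia.
  - intros a b Ha Hb. rewrite <- (H2 a b Ha Hb). rewrite !iter_r. split; intros; lia.
Qed.

Lemma part1 (n : nat) (Hn : (2 <= n)%nat) (w : Z -> Z) (alpha : Z) :
     affine_perm n w -> avoids w (2 :: 3 :: 1 :: nil) ->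
     1 <= alpha <= Z.of_nat n ->
     (forall k, 1 <= k <= Z.of_nat n -> w k <= w alpha) ->
     Z.of_nat n <= w alpha <= Z.of_nat n + alpha - 1 /\
     window_is_perm n (Nat.iter (Z.to_nat (w alpha - Z.of_nat n)) sigma_l w) /\
     Nat.iter (Z.to_nat (w alpha - Z.of_nat n)) sigma_l w
       (alpha - w alpha + Z.of_nat n) = Z.of_nat n.
Proof.
  intros [Hinj [Hsurj [Hstep Hsum]]] Hav Ha Hmax. unfold avoids in Hav.
  assert (Hn1 : (1 <= n)%nat) by lia.
  pose proof (per n w Hstep) as Hper.
  pose proof (decomp n Hn1) as Hdec.
  assert (HW : forall c, 2 * lsum (win w n c) = 2 * Z.of_nat n * c + Z.of_nat n * (Z.of_nat n + 1)).
  { intros c. rewrite (win_sum n w Hstep c), <- sum_w_win, Hsum.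
    destruct (tri_even n) as [q Hq]. rewrite Hq, (Z.mul_comm 2 q), Z.div_mul by lia. nia. }
  pose proof (fun c => bal_min n w c Hn1 Hinj (HW c)) as Bmin.
  pose proof (fun c => bal_max n w c Hn1 Hinj (HW c)) as Bmax.
  assert (Mge : Z.of_nat n <= w alpha).
  { pose proof (sum_max (win w n 0) (w alpha) (NoDup_win w n 0 Hinj)) as H.
    rewrite length_win in H.
    assert (H1 : forall y, In y (win w n 0) -> y <= w alpha).
    { intros y Hy. apply In_win in Hy. destruct Hy as [j [Hj <-]]. apply Hmax; lia. }
    specialize (H H1). specialize (HW 0). nia. }
  remember (Z.of_nat n) as N eqn:HN.
  remember (w alpha) as M eqn:HM.
  assert (HN2 : 2 <= N) by lia.
  assert (F1 : forall i, i < alpha -> w i < M).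
  { intros i Hi. destruct (Hdec 0 i) as [t [i0 [-> Hi0]]].
    rewrite Hper. assert (w i0 <= M) by (subst M; apply Hmax; lia).
    destruct (Z.lt_trichotomy t 0) as [Ht|[->|Ht]].
    - assert (t * N <= - N) by nia. lia.
    - assert (i0 <> alpha) by lia.
      assert (w i0 <> M) by (intro E; subst M; apply Hinj in E; lia). lia.
    - assert (t * N >= N) by nia. lia. }
  assert (F2 : forall i l, i < alpha < l -> w i < w l).
  { intros i l Hil. destruct (Z_lt_le_dec (w i) (w l)) as [|Hle]; auto. exfalso.
    assert (w i <> w l) by (intro E; apply Hinj in E; lia).
    apply Hav. apply (pat231 w i alpha l); [lia|]. pose proof (F1 i ltac:(lia)). lia. }
  set (K := M - N).
  assert (HKdef : K = M - N) by reflexivity.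
  clearbody K.
  assert (HwK : w (alpha - N) = K).
  { pose proof (Hstep (alpha - N)) as H. try rewrite <- HN in H.
    replace (alpha - N + N) with alpha in H by ring. lia. }
  assert (WIN : forall i, K + 1 <= i <= K + N -> K + 1 <= w i <= K + N).
  { destruct (classic (exists j, alpha - N < j <= K /\ K < w j)) as [[j [Hj Hwj]] | HB].
    - assert (Hlow : forall i, K + 1 <= i <= K + N -> K + 1 <= w i).
      { intros i Hi. destruct (Z.lt_trichotomy i alpha) as [Hlt|[Heq|Hgt]].
        + assert (w i <> K) by (intro E; rewrite <- HwK in E; apply Hinj in E; lia).
          destruct (Z_lt_le_dec (w i) K); [|lia]. exfalso; apply Hav.
          apply (pat231 w (alpha - N) j i); [lia | rewrite HwK; lia].
        + subst i. lia.
        + pose proof (F2 (alpha - N) i ltac:(lia)) as H. rewrite HwK in H. lia. }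
      intros i Hi. split; [apply Hlow; auto|]. apply (Bmin K); auto.
    - assert (Hhigh : forall j, (K - N) + 1 <= j <= (K - N) + N -> w j <= (K - N) + N).
      { intros j Hj. destruct (Z.lt_trichotomy j (alpha - N)) as [Hlt|[Heq|Hgt]].
        + pose proof (F1 (j + N) ltac:(lia)) as H. rewrite Hstep in H. lia.
        + subst j. rewrite HwK. lia.
        + destruct (Z_le_gt_dec (w j) K); [lia|]. exfalso; apply HB; exists j; split; lia. }
      pose proof (Bmax (K - N) Hhigh) as Hge.
      intros i Hi. pose proof (Hhigh (i - N) ltac:(lia)). pose proof (Hge (i - N) ltac:(lia)).
      pose proof (Hstep (i - N)) as Hs1. 
      replace (i - N + N) with i in Hs1 by ring. lia. }
  assert (Kle : K <= alpha - 1).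
  { destruct (Z_le_gt_dec K (alpha - 1)) as [|Hgt]; auto. exfalso.
    destruct (Hdec K alpha) as [t [i0 [Heq Hi0]]]. try rewrite <- HN in Hi0, Heq.
    assert (t < 0) by nia. assert (t * N <= - N) by nia.
    pose proof (WIN i0 Hi0). pose proof (Hper t i0) as Hp1. rewrite <- Heq in Hp1. lia. }
  assert (HKnat : Z.of_nat (Z.to_nat K) = K) by (apply Z2Nat.id; lia).
  split; [lia|]. split.
  - intros x. split.
    + intros [i [Hi Hu]]. rewrite iter_l, HKnat in Hu. pose proof (WIN (i + K) ltac:(lia)). lia.
    + intros Hx. destruct (Hsurj (x + K)) as [z Hz].
      destruct (Hdec K z) as [t [i0 [Heq Hi0]]]. try rewrite <- HN in Hi0, Heq.
      pose proof (WIN i0 Hi0). pose proof (Hper t i0) as Hp2. rewrite <- Heq, Hz in Hp2.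
      assert (t = 0) by nia. subst t.
      exists (i0 - K). split; [lia|]. rewrite iter_l, HKnat.
      replace (i0 - K + K) with i0 by ring. lia.
  - rewrite iter_l, HKnat. replace (alpha - M + N + K) with alpha by lia. lia.
Qed.

Theorem mainTheorem9 (n : nat) (Hn : (2 <= n)%nat) :
  (forall (w : Z -> Z) (alpha : Z),
     affine_perm n w -> avoids w (2 :: 3 :: 1 :: nil) ->
     1 <= alpha <= Z.of_nat n ->
     (forall k, 1 <= k <= Z.of_nat n -> w k <= w alpha) ->
     Z.of_nat n <= w alpha <= Z.of_nat n + alpha - 1 /\
     window_is_perm n (Nat.iter (Z.to_nat (w alpha - Z.of_nat n)) sigma_l w) /\
     Nat.iter (Z.to_nat (w alpha - Z.of_nat n)) sigma_l w
       (alpha - w alpha + Z.of_nat n) = Z.of_nat n) /\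
  (forall (u : Z -> Z) (i : Z),
     affine_perm n u -> window_is_perm n u -> avoids u (2 :: 3 :: 1 :: nil) ->
     u i = Z.of_nat n ->
     forall j : nat, Z.of_nat j <= Z.of_nat n - i ->
       avoids (Nat.iter j sigma_r u) (2 :: 3 :: 1 :: nil)).
Proof.
  split.
  - intros w alpha H1 H2 H3 H4. apply part1; auto.
  - intros u i _ _ Hav _ j _. apply part2; auto.
Qed.
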